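(* Let $V$ be a vector space over a field $\mathbb{K}$, $F$ a bilinear form on $V$, $Q=Q_F$ (i.e. $Q(x)=F(x,x)$), and let $F'=F+A$ with $A$ an alternating bilinear form on $V$ (so $Q_{F'}=Q$). Let $\rho_F,\rho_{F'}:\mathrm{Cl}(V,Q)\to\mathrm{End}(\bigwedge(V))$ be the representations $\rho_F=\bar\Lambda_F$, $\rho_{F'}=\bar\Lambda_{F'}$. Then these representations are equivalent; namely $$\rho_{F'}(a)=\bar\lambda_A\circ\rho_F(a)\circ\bar\lambda_A^{-1}\quad\text{for all }a\in\mathrm{Cl}(V,Q).$$
   Context: $\mathrm{Cl}(V,Q)=\mathcal{T}(V)/I(Q)$ where $I(Q)$ is the two-sided ideal of the tensor algebra generated by $x\otimes x-Q(x)1$; $\bigwedge(V)=\mathrm{Cl}(V,0)$ is the exterior algebra. For $f\in V^*$, $\bar{i}_f$ is the unique linear map on $\bigwedge(V)$ with $\bar{i}_f(1)=0$ and $\bar{i}_f(x\wedge w)=f(x)w-x\wedge\bar{i}_f(w)$ ($x\in V$); for a bilinear form $G$, $\bar{i}_x^G:=\bar{i}_{g_x}$ with $g_x(y)=G(x,y)$. For $x\in V$ the operator $\bar e_x+\bar{i}_x^G$ on $\bigwedge(V)$ (with $\bar e_x(w)=x\wedge w$) squares to $G(x,x)$, so $x\mapsto \bar e_x+\bar i_x^G$ extends uniquely to an algebra homomorphism $\bar\Lambda_G:\mathrm{Cl}(V,Q_G)\to\mathrm{End}(\bigwedge(V))$, where $Q_G(x)=G(x,x)$. For an alternating form $A$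 (so $Q_A=0$), $\bar\lambda_A:\bigwedge(V)\to\bigwedge(V)$ is $\bar\lambda_A(u)=\bar\Lambda_A(u)(1)$; it is a linear bijection with inverse $\bar\lambda_{-A}$. *)

(* Defs.v *)
(* Elements of Cl(V,Q) and of /\(V) = Cl(V,0) are handled through their
   representatives in the free algebra; equality in the quotient is the
   ideal congruence [cong Q]. *)
From HB Require Import structures.
From mathcomp Require Import all_boot all_order all_algebra.
Set Implicit Arguments. Unset Strict Implicit. Unset Printing Implicit Defensive.
Import Order.TTheory GRing.Theory Num.Theory.
Local Open Scope ring_scope.

Section CliffordDefs.
Variables (K : fieldType) (V : lmodType K).

(* free associative K-algebra on the set V: finite formal sums of
   (coefficient, word) monomials; its "true" equality is [coef] equality *)
Definition fa := seq (K * seq V).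

Definition fscale (c : K) (u : fa) : fa := [seq (c * m.1, m.2) | m <- u].
Definition fmul (u v : fa) : fa :=
  [seq (m.1 * n.1, m.2 ++ n.2) | m <- u, n <- v].
Definition fword (w : seq V) : fa := [:: (1, w)].
Definition coef (u : fa) (w : seq V) : K :=
  \sum_(m <- u) (if m.2 == w then m.1 else 0).

(* generators of the two-sided ideal: the linearity relations (whose
   quotient gives the tensor algebra T(V)) and x (x) x - Q(x) 1 *)
Definition gen_add (x y : V) : fa :=
  [:: (1, [:: x + y]); (-1, [:: x]); (-1, [:: y])].
Definition gen_scale (c : K) (x : V) : fa :=
  [:: (1, [:: c *: x]); (- c, [:: x])].
Definition gen_clif (Q : V -> K) (x : V) : fa :=
  [:: (1, [:: x; x]); (- Q x, [::])].

Definition is_gen (Q : V -> K) (g : fa) : Prop :=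
  (exists x y, g = gen_add x y) \/ (exists c x, g = gen_scale c x)
  \/ (exists x, g = gen_clif Q x).

Definition in_ideal (Q : V -> K) (u : fa) : Prop :=
  exists s : seq (K * seq V * fa * seq V),
    (forall t, t \in s -> is_gen Q t.1.2) /\
    coef u =1 coef (flatten [seq fscale t.1.1.1
                      (fmul (fmul (fword t.1.1.2) t.1.2) (fword t.2)) | t <- s]).

Definition cong (Q : V -> K) (u v : fa) : Prop := in_ideal Q (u ++ fscale (-1) v).

(* equality in the exterior algebra /\(V) = Cl(V,0) *)
Definition ext_eq (u v : fa) : Prop := cong (fun _ => 0) u v.

Definition ext (x : V) (u : fa) : fa := [seq (m.1, x :: m.2) | m <- u].

Fixpoint ins_word (f : V -> K) (w : seq V) : fa :=
  match w with
  | [::] => [::]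
  | y :: w' => (f y, w') :: [seq (- m.1, y :: m.2) | m <- ins_word f w']
  end.
Definition ins (f : V -> K) (u : fa) : fa :=
  flatten [seq fscale m.1 (ins_word f m.2) | m <- u].

Definition opv (G : V -> V -> K) (x : V) (u : fa) : fa := ext x u ++ ins (G x) u.

Definition opword (G : V -> V -> K) (w : seq V) (u : fa) : fa := foldr (opv G) u w.

(* \bar\Lambda_G (a) applied to w, a representing an element of Cl(V,Q_G) *)
Definition Lam (G : V -> V -> K) (a : fa) (w : fa) : fa :=
  flatten [seq fscale m.1 (opword G m.2 w) | m <- a].

Definition lam (A : V -> V -> K) (u : fa) : fa := Lam A u (fword [::]).

End CliffordDefs.

(* Main.v *)
Require Import Defs.
From HB Require Import structures.
From mathcomp Require Import all_boot all_order all_algebra.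
From mathcomp Require Import ring.
Set Implicit Arguments. Unset Strict Implicit. Unset Printing Implicit Defensive.
Import GRing.Theory.
Local Open Scope ring_scope.

Section S.
Variables (K : fieldType) (V : lmodType K).
Notation fa := (fa V).
Implicit Types (u v : fa) (w z : seq V).

Definition ceq u v := coef u =1 coef v.
Local Notation "u ~~ v" := (ceq u v) (at level 70).

Lemma coefE u z : coef u z = \sum_(m <- u) m.1 * (m.2 == z)%:R.
Proof. by apply: eq_bigr => m _; case: eqP => _; rewrite ?mulr1 ?mulr0. Qed.

Lemma coef_nil z : coef [::] z = 0.
Proof. by rewrite /coef big_nil. Qed.
Lemma coef_cons m u z : coef (m :: u) z = m.1 * (m.2 == z)%:R + coef u z.
Proof. by rewrite !coefE big_cons. Qed.
Lemma coef_cat u v z : coef (u ++ v) z = coef u z + coef v z.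
Proof. by rewrite /coef big_cat. Qed.
Lemma coef_fscale c u z : coef (fscale c u) z = c * coef u z.
Proof. by rewrite !coefE /fscale big_map big_distrr; apply: eq_bigr => m _ /=; ring. Qed.
Lemma coef_flatten_map (T : Type) (h : T -> fa) (s : seq T) z :
  coef (flatten (map h s)) z = \sum_(t <- s) coef (h t) z.
Proof. elim: s => [|t s IH] /=; first by rewrite coef_nil big_nil.
by rewrite coef_cat big_cons IH. Qed.

Definition L (h : seq V -> fa) u : fa := flatten [seq fscale m.1 (h m.2) | m <- u].

Lemma coef_L h u z : coef (L h u) z = \sum_(m <- u) m.1 * coef (h m.2) z.
Proof. by rewrite /L coef_flatten_map; apply: eq_bigr => m _; rewrite coef_fscale. Qed.

Lemma regroup (g : seq V -> K) u (S : seq (seq V)) :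
  uniq S -> (forall m, m \in u -> m.2 \in S) ->
  \sum_(m <- u) m.1 * g m.2 = \sum_(w <- S) coef u w * g w.
Proof.
move=> US HS.
under [RHS]eq_bigr => w _ do rewrite coefE big_distrl.
rewrite exchange_big /=; apply: eq_big_seq => m mu.
rewrite (bigD1_seq m.2) ?HS //= eqxx mulr1 big1 ?addr0 // => w /negbTE.
by rewrite eq_sym => ->; rewrite mulr0 mul0r.
Qed.

Lemma sum_ceq (g : seq V -> K) u v : u ~~ v ->
  \sum_(m <- u) m.1 * g m.2 = \sum_(m <- v) m.1 * g m.2.
Proof.
move=> e; set S := undup [seq m.2 | m <- u ++ v].
have US : uniq S by apply: undup_uniq.
rewrite (regroup g US) ?(regroup g US) //; last 2 first.
- by move=> m mv; rewrite mem_undup; apply/mapP; exists m => //; rewrite mem_cat mv orbT.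
- by move=> m mu; rewrite mem_undup; apply/mapP; exists m => //; rewrite mem_cat mu.
by apply: eq_bigr => w _; rewrite e.
Qed.

Lemma L_ceq h u v : u ~~ v -> L h u ~~ L h v.
Proof. by move=> e z; rewrite !coef_L (sum_ceq (fun w => coef (h w) z) e). Qed.


Lemma ceq_refl u : u ~~ u. Proof. by []. Qed.
Lemma ceq_sym u v : u ~~ v -> v ~~ u. Proof. by move=> e z; rewrite e. Qed.
Lemma ceq_trans u v (t : fa) : u ~~ v -> v ~~ t -> u ~~ t.
Proof. by move=> e1 e2 z; rewrite e1 e2. Qed.
Lemma ceq_cat u u' v v' : u ~~ u' -> v ~~ v' -> u ++ v ~~ u' ++ v'.
Proof. by move=> e1 e2 z; rewrite !coef_cat e1 e2. Qed.
Lemma ceq_fscale c u v : u ~~ v -> fscale c u ~~ fscale c v.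
Proof. by move=> e z; rewrite !coef_fscale e. Qed.

Definition lin (T : fa -> fa) :=
  [/\ forall u v, u ~~ v -> T u ~~ T v,
      forall u v, T (u ++ v) ~~ T u ++ T v &
      forall c u, T (fscale c u) ~~ fscale c (T u)].

Lemma lin_kernel (T : fa -> fa) (g : seq V -> seq V -> K) :
  (forall u z, coef (T u) z = \sum_(m <- u) m.1 * g m.2 z) -> lin T.
Proof.
move=> H; split.
- by move=> u v e z; rewrite !H (sum_ceq (fun w => g w z) e).
- by move=> u v z; rewrite coef_cat !H big_cat.
- move=> c u z; rewrite coef_fscale !H /fscale big_map big_distrr.
  by apply: eq_bigr => m _ /=; rewrite mulrA.
Qed.

Lemma lin_L h : lin (L h).
Proof. by apply: (lin_kernel (g := fun w z => coef (h w) z)) => u z; rewrite coef_L. Qed.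

Lemma L_fword u : u ~~ L (@fword K V) u.
Proof.
move=> z; rewrite coef_L coefE; apply: eq_bigr => m _.
by rewrite /fword coef_cons coef_nil addr0 mul1r.
Qed.

Lemma lin_L_comp T h u : lin T -> T (L h u) ~~ L (fun w => T (h w)) u.
Proof.
case=> HT Hc Hs; elim: u => [|m u IH] /=.
- rewrite /L /=. have -> : [::] = fscale 0 ([::] : fa) by [].
  move=> z; rewrite Hs !coef_fscale !mul0r //.
- rewrite /L /= -/(L h u) -/(L _ u).
  apply: ceq_trans (Hc _ _) _; apply: ceq_cat => //.
Qed.

Lemma lin_ext T S : lin T -> lin S -> (forall w, T (fword w) ~~ S (fword w)) ->
  forall u, T u ~~ S u.
Proof.
move=> lT lS H u.
have [HT _ _] := lT; have [HS _ _] := lS.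
apply: ceq_trans (HT _ _ (L_fword u)) _.
apply: ceq_trans (@lin_L_comp T (@fword K V) u lT) _.
apply: ceq_trans _ (ceq_sym (HS _ _ (L_fword u))).
apply: ceq_trans _ (ceq_sym (@lin_L_comp S (@fword K V) u lS)).
move=> z; rewrite !coef_L; apply: eq_bigr => m _; by rewrite H.
Qed.

Lemma lin_comp T S : lin T -> lin S -> lin (fun u => T (S u)).
Proof.
case=> T1 T2 T3 [S1 S2 S3]; split.
- by move=> u v e; apply: T1; apply: S1.
- move=> u v; apply: ceq_trans (T1 _ _ (S2 u v)) (T2 _ _).
- move=> c u; apply: ceq_trans (T1 _ _ (S3 c u)) (T3 _ _).
Qed.

Lemma lin_cat T S : lin T -> lin S -> lin (fun u => T u ++ S u).
Proof.
case=> T1 T2 T3 [S1 S2 S3]; split.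
- by move=> u v e; apply: ceq_cat; [apply: T1|apply: S1].
- move=> u v z; rewrite !coef_cat (T2 u v z) (S2 u v z) !coef_cat; ring.
- move=> c u z; rewrite !coef_cat (T3 c u z) (S3 c u z) !coef_fscale coef_cat; ring.
Qed.

Lemma coef_ext x u z : coef (ext x u) z = \sum_(m <- u) m.1 * ((x :: m.2) == z)%:R.
Proof. by rewrite coefE /ext big_map. Qed.

Lemma lin_ext_op x : lin (ext x).
Proof. by apply: (lin_kernel (g := fun w z => ((x :: w) == z)%:R)) => u z; rewrite coef_ext. Qed.

Lemma lin_ins f : lin (ins f).
Proof. exact: lin_L. Qed.

Lemma lin_opv G x : lin (opv G x).
Proof. exact: lin_cat (lin_ext_op x) (lin_ins (G x)). Qed.

Lemma lin_opword G w : lin (opword G w).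
Proof.
elim: w => [|x w IH] /=.
- by split => // u v; rewrite /opword.
- exact: lin_comp (lin_opv G x) IH.
Qed.

Lemma lin_lam B : lin (lam B).
Proof. exact: lin_L. Qed.

Lemma coef_Lam G a (t : fa) z : coef (Lam G a t) z = \sum_(m <- a) m.1 * coef (opword G m.2 t) z.
Proof. exact: coef_L. Qed.

Lemma lin_Lam G a : lin (Lam G a).
Proof.
split.
- move=> u v e z; rewrite !coef_Lam; apply: eq_bigr => m _.
  by have [H _ _] := lin_opword G m.2; rewrite (H _ _ e).
- move=> u v z; rewrite coef_cat !coef_Lam -big_split; apply: eq_bigr => m _ /=.
  by have [_ H _] := lin_opword G m.2; rewrite H coef_cat mulrDr.
- move=> c u z; rewrite coef_fscale !coef_Lam big_distrr; apply: eq_bigr => m _ /=.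
  by have [_ _ H] := lin_opword G m.2; rewrite H coef_fscale mulrCA.
Qed.


Lemma linR T u v : lin T -> u ~~ v -> T u ~~ T v.
Proof. by case=> H _ _; apply: H. Qed.
Lemma linD T u v z : lin T -> coef (T (u ++ v)) z = coef (T u) z + coef (T v) z.
Proof. by case=> _ H _; rewrite H coef_cat. Qed.
Lemma linZ T c u z : lin T -> coef (T (fscale c u)) z = c * coef (T u) z.
Proof. by case=> _ _ H; rewrite H coef_fscale. Qed.

Lemma lin_fscale c : lin (fscale c).
Proof.
apply: (lin_kernel (g := fun w z => c * (w == z)%:R)) => u z.
by rewrite coef_fscale coefE big_distrr; apply: eq_bigr => m _; rewrite mulrCA.
Qed.

Lemma coef_negext y (P : fa) z :
  coef [seq (- m.1, y :: m.2) | m <- P] z = - coef (ext y P) z.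
Proof. by rewrite coef_ext coefE big_map -sumrN; apply: eq_bigr => m _ /=; rewrite mulNr. Qed.

Lemma ins_fword f w : ins f (fword w) = fscale 1 (ins_word f w) ++ [::].
Proof. by []. Qed.

Lemma ins_ext f x u z :
  coef (ins f (ext x u)) z = f x * coef u z - coef (ext x (ins f u)) z.
Proof.
suff H : ins f (ext x u) ~~ fscale (f x) u ++ fscale (-1) (ext x (ins f u)).
  by rewrite H coef_cat !coef_fscale mulN1r.
move: u; apply: lin_ext.
- exact: lin_comp (lin_ins f) (lin_ext_op x).
- apply: lin_cat; first exact: lin_fscale.
  exact: lin_comp (lin_fscale _) (lin_comp (lin_ext_op x) (lin_ins f)).
move=> w z'; have -> : ext x (fword w) = fword (x :: w) by [].
rewrite ins_fword cats0 coef_fscale mul1r /= coef_cons coef_negext /=.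
rewrite coef_cons coef_fscale ins_fword cats0 (linZ _ _ _ (lin_ext_op x)) /=.
ring.
Qed.


Lemma ins_ext_ceq f x u :
  ins f (ext x u) ~~ fscale (f x) u ++ fscale (-1) (ext x (ins f u)).
Proof. by move=> z; rewrite ins_ext coef_cat !coef_fscale mulN1r. Qed.

Lemma ins_anti f g u : ins f (ins g u) ~~ fscale (-1) (ins g (ins f u)).
Proof.
move: u; apply: lin_ext.
- exact: lin_comp (lin_ins f) (lin_ins g).
- exact: lin_comp (lin_fscale _) (lin_comp (lin_ins g) (lin_ins f)).
elim=> [|x w IH] z; first by rewrite coef_fscale /= coef_nil mulr0.
have -> : fword (x :: w) = ext x (fword w) by [].
rewrite coef_fscale.
rewrite (linR (lin_ins f) (ins_ext_ceq g x (fword w)) z) (linD _ _ _ (lin_ins f)).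
rewrite (linZ _ _ _ (lin_ins f)) (linZ _ _ _ (lin_ins f)) ins_ext.
rewrite (linR (lin_ins g) (ins_ext_ceq f x (fword w)) z) (linD _ _ _ (lin_ins g)).
rewrite (linZ _ _ _ (lin_ins g)) (linZ _ _ _ (lin_ins g)) ins_ext.
rewrite (linR (lin_ext_op x) IH z) (linZ _ _ _ (lin_ext_op x)).
ring.
Qed.


Lemma ins_opv f G x u z :
  coef (ins f (opv G x u)) z = f x * coef u z - coef (opv G x (ins f u)) z.
Proof.
rewrite /opv (linD _ _ _ (lin_ins f)) ins_ext coef_cat.
rewrite (ins_anti f (G x) u z) coef_fscale; ring.
Qed.

Lemma ceq_f1 (X : fa) : fscale 1 X ++ [::] ~~ X.
Proof. by move=> z; rewrite cats0 coef_fscale mul1r. Qed.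

Lemma lam_fword B w : lam B (fword w) = fscale 1 (opword B w (fword [::])) ++ [::].
Proof. by []. Qed.

Lemma lam_ext B y u : lam B (ext y u) ~~ opv B y (lam B u).
Proof.
move: u; apply: lin_ext.
- exact: lin_comp (lin_lam B) (lin_ext_op y).
- exact: lin_comp (lin_opv B y) (lin_lam B).
move=> w; have -> : ext y (fword w) = fword (y :: w) by [].
apply: ceq_trans (ceq_f1 _) _; rewrite lam_fword.
exact: ceq_sym (linR (lin_opv B y) (ceq_f1 _)).
Qed.

Lemma lam_ins B f u : lam B (ins f u) ~~ ins f (lam B u).
Proof.
move: u; apply: lin_ext.
- exact: lin_comp (lin_lam B) (lin_ins f).
- exact: lin_comp (lin_ins f) (lin_lam B).
elim=> [|x w IH] z; first by rewrite /=.
have -> : fword (x :: w) = ext x (fword w) by [].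
rewrite (linR (lin_lam B) (ins_ext_ceq f x (fword w)) z) (linD _ _ _ (lin_lam B)).
rewrite !(linZ _ _ _ (lin_lam B)) (lam_ext B x _ z) (linR (lin_opv B x) IH z).
rewrite (linR (lin_ins f) (lam_ext B x (fword w)) z) ins_opv; ring.
Qed.

Lemma insw_zero f w z : (forall y, f y = 0) -> coef (ins_word f w) z = 0.
Proof.
move=> H; elim: w z => [|y w IH] z /=; first by rewrite coef_nil.
rewrite coef_cons coef_negext H mul0r add0r.
have e : ins_word f w ~~ [::] by move=> z'; rewrite IH coef_nil.
by rewrite (linR (lin_ext_op y) e z) /= coef_nil oppr0.
Qed.

Lemma insw_add h f g w z : (forall y, h y = f y + g y) ->
  coef (ins_word h w) z = coef (ins_word f w) z + coef (ins_word g w) z.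
Proof.
move=> H; elim: w z => [|y w IH] z /=; first by rewrite !coef_nil addr0.
rewrite !coef_cons !coef_negext H /=.
have e : ins_word h w ~~ ins_word f w ++ ins_word g w by move=> z'; rewrite IH coef_cat.
rewrite (linR (lin_ext_op y) e z) (linD _ _ _ (lin_ext_op y)); ring.
Qed.

Lemma ins_add h f g u z : (forall y, h y = f y + g y) ->
  coef (ins h u) z = coef (ins f u) z + coef (ins g u) z.
Proof.
move=> H; rewrite /ins -!/(L _ u) !coef_L -big_split; apply: eq_bigr => m _ /=.
by rewrite (insw_add _ _ H) mulrDr.
Qed.

Lemma ins_zero f u z : (forall y, f y = 0) -> coef (ins f u) z = 0.
Proof.
move=> H; rewrite /ins -!/(L _ u) !coef_L big1 // => m _.
by rewrite insw_zero // mulr0.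
Qed.

Lemma lin_id : lin id. Proof. by split. Qed.

Lemma lam_inv B A u : (forall x y, B x y + A x y = 0) -> lam B (lam A u) ~~ u.
Proof.
move=> H; move: u; apply: (lin_ext (T := fun u => lam B (lam A u)) (S := id)).
- exact: lin_comp (lin_lam B) (lin_lam A).
- exact: lin_id.
elim=> [|x w IH] z.
  by rewrite lam_fword (linR (lin_lam B) (ceq_f1 _) z) lam_fword (ceq_f1 _ z).
have -> : fword (x :: w) = ext x (fword w) by [].
rewrite (linR (lin_lam B) (lam_ext A x (fword w)) z) /opv (linD _ _ _ (lin_lam B)).
rewrite (lam_ext B x _ z) (lam_ins B (A x) _ z) /opv coef_cat.
rewrite (linR (lin_ext_op x) IH z) -addrA.
have -> : coef (ins (B x) (lam B (lam A (fword w)))) z +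
          coef (ins (A x) (lam B (lam A (fword w)))) z = 0.
  by rewrite -(ins_add _ _ (h := fun _ => 0)) ?ins_zero // => y; rewrite H.
by rewrite addr0.
Qed.

Lemma opword_inter F A F' m u : (forall x y, F' x y = F x y + A x y) ->
  opword F' m (lam A u) ~~ lam A (opword F m u).
Proof.
move=> H; elim: m u => [|x m IH] u //=.
move=> z; rewrite (linR (lin_opv F' x) (IH u) z).
set v := opword F m u.
rewrite /opv coef_cat (linD _ _ _ (lin_lam A)) (lam_ext A x v z) (lam_ins A (F x) v z).
rewrite /opv coef_cat (ins_add _ _ (H x)); ring.
Qed.

Lemma Lam_inter F A F' a u : (forall x y, F' x y = F x y + A x y) ->
  Lam F' a (lam A u) ~~ lam A (Lam F a u).
Proof.
move=> H z; rewrite coef_Lam /Lam -/(L _ a) (lin_L_comp _ _ (lin_lam A) z) coef_L.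
by apply: eq_bigr => m _; rewrite (opword_inter _ _ H).
Qed.


Definition term a g b : fa := fmul (fmul (fword a) g) (fword b).
Definition term' a (g : fa) b : fa := [seq (n.1, a ++ n.2 ++ b) | n <- g].

Lemma term_ceq a g b : term a g b ~~ term' a g b.
Proof.
move=> z; rewrite /term /fmul /fword /= cats0.
rewrite coef_flatten_map big_map /term' coefE big_map; apply: eq_bigr => n _ /=.
by rewrite coef_cons coef_nil addr0 /= mul1r mulr1 catA.
Qed.


Definition Z0 : V -> K := fun _ => 0.
Definition I0 u := in_ideal Z0 u.
Definition Gs (s : seq (K * seq V * fa * seq V)) : fa :=
  flatten [seq fscale t.1.1.1 (fmul (fmul (fword t.1.1.2) t.1.2) (fword t.2)) | t <- s].

Lemma I0_ceq u v : u ~~ v -> I0 v -> I0 u.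
Proof. by move=> e [s [Hs Hc]]; exists s; split => // z; rewrite e Hc. Qed.

Lemma I0_zero u : u ~~ [::] -> I0 u.
Proof. by move=> e; exists [::]; split => // z; rewrite e. Qed.

Lemma I0_cat u v : I0 u -> I0 v -> I0 (u ++ v).
Proof.
move=> [s1 [H1 C1]] [s2 [H2 C2]]; exists (s1 ++ s2); split.
- by move=> t; rewrite mem_cat => /orP[]; [apply: H1|apply: H2].
- by move=> z; rewrite map_cat flatten_cat !coef_cat C1 C2.
Qed.

Lemma I0_fscale c u : I0 u -> I0 (fscale c u).
Proof.
move=> [s [H C]]; exists [seq (c * t.1.1.1, t.1.1.2, t.1.2, t.2) | t <- s]; split.
- by move=> t /mapP[t' t's ->] /=; apply: H.
- move=> z; rewrite coef_fscale C !coef_flatten_map big_map big_distrr.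
  by apply: eq_bigr => t _ /=; rewrite !coef_fscale mulrA.
Qed.

Lemma I0_term k a g b : is_gen Z0 g -> I0 (fscale k (term a g b)).
Proof.
move=> Hg; exists [:: (k, a, g, b)]; split.
  by move=> t; rewrite inE => /eqP -> /=.
by move=> z; rewrite /= coef_cat coef_nil addr0.
Qed.

Lemma I0_term' a g b : is_gen Z0 g -> I0 (term' a g b).
Proof.
move=> Hg; apply: I0_ceq (I0_term 1 a b Hg).
by move=> z; rewrite coef_fscale mul1r term_ceq.
Qed.

Lemma lin_nil T : lin T -> T [::] ~~ [::].
Proof.
move=> lT z; have -> : ([::] : fa) = fscale 0 [::] by [].
by rewrite (linZ _ _ _ lT) mul0r coef_nil.
Qed.

Lemma I0_closed T : lin T ->
  (forall a g b, is_gen Z0 g -> I0 (T (term' a g b))) -> forall u, I0 u -> I0 (T u).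
Proof.
move=> lT HT u [s [Hs C]].
apply: (I0_ceq (linR lT C)); rewrite -/(Gs s).
elim: s Hs {C} => [|t s IH] Hs.
  by apply: I0_zero; apply: lin_nil.
rewrite /Gs /= -/(Gs s).
have lT' := lT; case: lT' => T1 T2 T3.
apply: (I0_ceq (T2 _ _)); apply: I0_cat; last first.
  by apply: IH => t' Ht'; apply: Hs; rewrite inE Ht' orbT.
apply: (I0_ceq (T3 _ _)); apply: I0_fscale.
apply: (I0_ceq (T1 _ _ (term_ceq _ _ _))); apply: HT.
by apply: (Hs t); rewrite inE eqxx.
Qed.


Lemma I0_L h P : (forall w, I0 (h w)) -> I0 (L h P).
Proof.
move=> H; elim: P => [|m P IH]; first by apply: I0_zero.
by rewrite /L /= -/(L h P); apply: I0_cat => //; apply: I0_fscale.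
Qed.

Lemma I0_ext x u : I0 u -> I0 (ext x u).
Proof.
apply: I0_closed; first exact: lin_ext_op.
move=> a g b Hg; have -> : ext x (term' a g b) = term' (x :: a) g b.
  by rewrite /ext /term' -map_comp.
exact: I0_term'.
Qed.

Lemma coef_L_term g P z :
  coef (L (fun b' => term' [::] g b') P) z =
  \sum_(n <- g) n.1 * coef [seq (m.1, n.2 ++ m.2) | m <- P] z.
Proof.
rewrite coef_L.
under eq_bigr => m _ do rewrite coefE big_map big_distrr.
rewrite exchange_big; apply: eq_bigr => n _ /=.
rewrite coefE big_map big_distrr; apply: eq_bigr => m _ /=; ring.
Qed.

Lemma coef_ins_term f g b z :
  coef (ins f (term' [::] g b)) z = \sum_(n <- g) n.1 * coef (ins_word f (n.2 ++ b)) z.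
Proof. by rewrite /ins -/(L _ _) coef_L /term' big_map. Qed.

Lemma negext_ceq y (P : fa) : [seq (- m.1, y :: m.2) | m <- P] ~~ fscale (-1) (ext y P).
Proof. by move=> z; rewrite coef_negext coef_fscale mulN1r. Qed.

Definition linf (f : V -> K) := forall c y y', f (c *: y + y') = c * f y + f y'.

Lemma ins_gen f g b : linf f -> is_gen Z0 g -> exists e,
  ins f (term' [::] g b) ~~ fscale e (L (fun b' => term' [::] g b') (ins_word f b)).
Proof.
move=> Hf; have f0 : f 0 = 0.
  have := Hf 1 0 0; rewrite scale1r addr0 mul1r => h.
  by apply: (@addrI _ (f 0)); rewrite addr0 -h.
have fD : forall y y', f (y + y') = f y + f y'.
  by move=> y y'; rewrite -[y in LHS]scale1r Hf mul1r.
have fZ : forall c y, f (c *: y) = c * f y.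
  by move=> c y; rewrite -[c *: y]addr0 Hf f0 addr0.
case=> [[x [y ->]]|[[c [x ->]]|[x ->]]].
- exists (-1) => z; rewrite coef_fscale coef_L_term coef_ins_term !big_cons !big_nil /=.
  rewrite !coef_cons !coef_negext fD.
  have E : forall t, [seq (m.1, t :: m.2) | m <- ins_word f b] = ext t (ins_word f b) by [].
  rewrite !E /=.
  ring.
- exists (-1) => z; rewrite coef_fscale coef_L_term coef_ins_term !big_cons !big_nil /=.
  rewrite !coef_cons !coef_negext fZ.
  have E : forall t, [seq (m.1, t :: m.2) | m <- ins_word f b] = ext t (ins_word f b) by [].
  rewrite !E /=.
  ring.
- exists 1 => z; rewrite coef_fscale coef_L_term coef_ins_term !big_cons !big_nil /=.
  rewrite !coef_cons !coef_negext /=.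
  rewrite (linR (lin_ext_op x) (negext_ceq x (ins_word f b)) z) (linZ _ _ _ (lin_ext_op x)).
  have -> : [seq (m.1, [:: x, x & m.2]) | m <- ins_word f b] = ext x (ext x (ins_word f b)) by rewrite /ext -map_comp.
  rewrite /Z0; ring.
Qed.


Lemma I0_ins f u : linf f -> I0 u -> I0 (ins f u).
Proof.
move=> Hf; apply: I0_closed; first exact: lin_ins.
move=> a g b Hg; elim: a => [|y a IH].
  have [e He] := ins_gen b Hf Hg.
  apply: (I0_ceq He); apply: I0_fscale; apply: I0_L => w; exact: I0_term'.
have -> : term' (y :: a) g b = ext y (term' a g b) by rewrite /ext /term' -map_comp.
apply: (I0_ceq (ins_ext_ceq f y _)); apply: I0_cat; apply: I0_fscale.
  exact: I0_term'.
exact: I0_ext.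
Qed.

Lemma I0_opword G m u : (forall x, linf (G x)) -> I0 u -> I0 (opword G m u).
Proof.
move=> HG Hu; elim: m => [|x m IH] //=.
by apply: I0_cat; [apply: I0_ext|apply: I0_ins].
Qed.

Lemma I0_Lam G a u : (forall x, linf (G x)) -> I0 u -> I0 (Lam G a u).
Proof. by move=> HG Hu; apply: I0_L => m; apply: I0_opword. Qed.

Lemma ext_eq_ceq u v : u ~~ v -> ext_eq u v.
Proof.
move=> e; apply: I0_zero => z.
by rewrite coef_cat coef_fscale e coef_nil mulN1r subrr.
Qed.

Lemma ext_eq_sym u v : ext_eq u v -> ext_eq v u.
Proof.
move=> H; apply: (I0_ceq (v := fscale (-1) (u ++ fscale (-1) v))); last exact: I0_fscale.
by move=> z; rewrite !(coef_cat, coef_fscale); ring.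
Qed.

Lemma ext_eq_trans u v t : ext_eq u v -> ext_eq v t -> ext_eq u t.
Proof.
move=> H1 H2; apply: (I0_ceq (v := (u ++ fscale (-1) v) ++ (v ++ fscale (-1) t))); last exact: I0_cat.
by move=> z; rewrite !(coef_cat, coef_fscale); ring.
Qed.

Lemma ext_eq_lin T u v : lin T -> (forall u, I0 u -> I0 (T u)) -> ext_eq u v -> ext_eq (T u) (T v).
Proof.
move=> lT HT H; apply: (I0_ceq (v := T (u ++ fscale (-1) v))); last exact: HT.
by move=> z; rewrite coef_cat (linD _ _ _ lT) (linZ _ _ _ lT) coef_fscale.
Qed.

End S.

Unset Implicit Arguments. Set Strict Implicit.

Theorem mainTheorem13 (K : fieldType) (V : lmodType K) (F A : V -> V -> K)
  (HFl : forall (c : K) (x y z : V), F (c *: x + y) z = c * F x z + F y z)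
  (HFr : forall (c : K) (x y z : V), F z (c *: x + y) = c * F z x + F z y)
  (HAl : forall (c : K) (x y z : V), A (c *: x + y) z = c * A x z + A y z)
  (HAr : forall (c : K) (x y z : V), A z (c *: x + y) = c * A z x + A z y)
  (HAalt : forall x : V, A x x = 0) :
  let F' := fun x y => F x y + A x y in
  let mA := fun x y => - A x y in
  (* \bar\lambda_{-A} is the inverse of \bar\lambda_A on /\(V) *)
  (forall w : fa V, ext_eq (lam mA (lam A w)) w) /\
  (forall w : fa V, ext_eq (lam A (lam mA w)) w) /\
  (* rho_{F'}(a) = \bar\lambda_A o rho_F(a) o \bar\lambda_A^{-1} *)
  (forall (a : fa V) (w : fa V),
      ext_eq (Lam F' a w) (lam A (Lam F a (lam mA w)))).
Proof.
move=> F' mA.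
have P1 : forall w : fa V, ext_eq (lam mA (lam A w)) w.
  by move=> w; apply: ext_eq_ceq; apply: lam_inv => x y; rewrite /mA addNr.
have P2 : forall w : fa V, ext_eq (lam A (lam mA w)) w.
  by move=> w; apply: ext_eq_ceq; apply: lam_inv => x y; rewrite /mA addrN.
split => //; split => // a w.
have HF' : forall x, linf (F' x).
  by move=> x c y y'; rewrite /F' HFr HAr; ring.
apply: (ext_eq_trans (v := Lam F' a (lam A (lam mA w)))).
  apply: (ext_eq_lin (lin_Lam F' a)); first by move=> u Hu; apply: I0_Lam.
  exact: ext_eq_sym (P2 w).
apply: ext_eq_ceq; apply: Lam_inter => x y; by [].
Qed.
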